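(* Let $n$ be even and let $N$ be a $5$-net of order $n$ with parallel classes $\Pi_0,\dots,\Pi_4$ and a relation $\mathcal R$ of type $(\lambda_0,\dots,\lambda_4)$. Put $g_i=\frac n2-\lambda_i$. Then for every $\mathbf b=(b_0,\dots,b_4)\in\{0,1\}^5$ with an even number of ones, $$t_{\mathbf b}=\frac1{16}n^2+\frac18 n\sum_{i=0}^{4}(-1)^{b_i}g_i+\frac14\sum_{0\le i<j\le 4}(-1)^{b_i+b_j}g_ig_j .$$
   Context: A $k$-net of order $n$ is a set $P$ of $n^2$ points together with a set $L$ of $kn$ lines (subsets of $P$), each line containing $n$ points and each point lying on $k$ lines, such that $L$ partitions into $k$ parallel classes $\Pi_0,\dots,\Pi_{k-1}$ of $n$ pairwise disjoint lines each, and any two lines from different parallel classes meet in exactly one point. A relation on a net is a set $\mathcal R\subseteq L$ such that every point lies on an even number of lines of $\mathcal R$. Its type is $(\lambda_0,\dots,\lambda_{k-1})$ with $\lambda_i=|\mathcal R\cap\Pi_i|$. The type of a point $p$ is the binary string $\mathbf b\in\{0,1\}^k$ with $b_i=1$ iff the line of $\Pi_i$ through $p$ lies in $\mathcal R$; $t_{\mathbf b}$ is the number of points of type $\mathbf b$. *)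

(* Defs.v *)
From mathcomp Require Import all_boot all_order all_algebra.
Set Implicit Arguments. Unset Strict Implicit. Unset Printing Implicit Defensive.
Import GRing.Theory Num.Theory.

(* A k-net of order n: points = the finite type P, lines = the set L of
   subsets of P, and cls assigns to each line its parallel class (0..k-1). *)
Definition is_net (k n : nat) (P : finType) (L : {set {set P}})
    (cls : {set P} -> 'I_k) : Prop :=
  [/\ #|P| = n ^ 2,
      #|L| = k * n,
      (forall l, l \in L -> #|l| = n),
      (forall p : P, #|[set l in L | p \in l]| = k) &
      (forall i : 'I_k, #|[set l in L | cls l == i]| = n)] /\
  [/\
      (forall l1 l2, l1 \in L -> l2 \in L -> cls l1 = cls l2 -> l1 != l2 ->
          [disjoint l1 & l2])
    & (forall l1 l2, l1 \in L -> l2 \in L -> cls l1 != cls l2 ->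
          #|l1 :&: l2| = 1)].

Definition is_relation (P : finType) (L R : {set {set P}}) : Prop :=
  R \subset L /\ (forall p : P, ~~ odd #|[set l in R | p \in l]|).

Definition rel_type k (P : finType) (R : {set {set P}}) (cls : {set P} -> 'I_k)
    (i : 'I_k) : nat := #|[set l in R | cls l == i]|.

Definition point_type k (P : finType) (L R : {set {set P}})
    (cls : {set P} -> 'I_k) (p : P) (i : 'I_k) : bool :=
  [exists l in L, [&& cls l == i, p \in l & l \in R]].

Definition t_count k (P : finType) (L R : {set {set P}})
    (cls : {set P} -> 'I_k) (b : 'I_k -> bool) : nat :=
  #|[set p : P | [forall i, point_type L R cls p i == b i]]|.

(* Main.v *)
Require Import Defs.
From mathcomp Require Import all_boot all_order all_algebra.
From mathcomp Require Import ring.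
Import GRing.Theory Num.Theory.
Section Comb.
Variables (k n : nat) (P : finType) (L R : {set {set P}}) (cls : {set P} -> 'I_k).
Hypothesis RL : R \subset L.
Hypothesis disj : forall l1 l2, l1 \in L -> l2 \in L -> cls l1 = cls l2 -> l1 != l2 ->
          [disjoint l1 & l2].
Hypothesis meet : forall l1 l2, l1 \in L -> l2 \in L -> cls l1 != cls l2 ->
          #|l1 :&: l2| = 1.
Hypothesis sizel : forall l, l \in L -> #|l| = n.

Lemma pt_sum p i : (point_type L R cls p i : nat) =
  \sum_(l in R | cls l == i) (p \in l : nat).
Proof.
case: (boolP (point_type L R cls p i)) => H.
- move/existsP: H => [l /andP[lL /and3P[/eqP ci pl lR]]].
  rewrite (bigD1 l) /=; last by rewrite lR ci eqxx.
  rewrite pl big1 // => m /andP[/andP[mR /eqP mi] ml].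
  case pm: (p \in m) => //.
  have := disj _ _ lL (subsetP RL m mR) _ _; rewrite ci mi eq_sym => /(_ erefl ml).
  by move=> D; rewrite (disjointFr D pl) in pm.
- apply/esym/big1 => m /andP[mR mi]; case pm: (p \in m) => //.
  case/negP: H; apply/existsP; exists m.
  by rewrite (subsetP RL m mR) mi pm mR.
Qed.

Lemma pt_parity p (Hev : ~~ odd #|[set l in R | p \in l]|) :
  ~~ odd (\sum_(i < k) (point_type L R cls p i : nat)).
Proof.
under eq_bigr do rewrite pt_sum.
rewrite -(partition_big cls xpredT) //.
idtac.
have -> : \sum_(l in R) (p \in l : nat) = \sum_(l in [set l in R | p \in l]) 1.
  rewrite big_mkcond [RHS]big_mkcond; apply: eq_bigr => l _.
  by rewrite inE; case: (l \in R); case: (p \in l).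
by rewrite sum1_card.
Qed.

Lemma sum_in (l : {set P}) : \sum_(p : P) (p \in l : nat) = #|l|.
Proof.
rewrite -sum1_card [RHS]big_mkcond; apply: eq_bigr => p _.
by case: (p \in l).
Qed.

Lemma S1 i : \sum_(p : P) (point_type L R cls p i : nat) = rel_type R cls i * n.
Proof.
under eq_bigr do rewrite pt_sum.
rewrite exchange_big /=.
rewrite (eq_bigr (fun _ => n)); last first.
  by move=> l /andP[lR _]; rewrite sum_in sizel // (subsetP RL l lR).
rewrite /rel_type -sum_nat_const; apply: eq_bigl => l; by rewrite inE.
Qed.

Lemma S2 i j : i != j -> \sum_(p : P) (point_type L R cls p i * point_type L R cls p j) =
   rel_type R cls i * rel_type R cls j.
Proof.
move=> ij.
under eq_bigr do rewrite !pt_sum big_distrl /=.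
under eq_bigr do under eq_bigr do rewrite big_distrr /=.
rewrite exchange_big /=.
rewrite (eq_bigr (fun _ => rel_type R cls j)).
  rewrite /rel_type -sum_nat_const; apply: eq_bigl => l; by rewrite inE.
move=> l /andP[lR /eqP li].
rewrite exchange_big /=.
rewrite (eq_bigr (fun _ => 1)).
  rewrite /rel_type sum1_card; apply: eq_card => m; by rewrite inE.
move=> m /andP[mR /eqP mj].
rewrite -(meet _ _ (subsetP RL l lR) (subsetP RL m mR)); last by rewrite li mj.
rewrite -sum_in; apply: eq_bigr => p _; rewrite inE.
by case: (p \in l); case: (p \in m).
Qed.
End Comb.
Local Open Scope ring_scope.
Lemma key (c : 'I_5 -> bool) : ~~ odd (\sum_(i<5) (c i : nat))%N ->
 (((\sum_(i<5) (c i : nat) == 0)%N : nat)%:R : rat) * 16 = 1 + \sum_(i<5) (-1)^+ c i + \sum_(i<5) \sum_(j<5 | (i<j)%N) (-1)^+ c i * (-1)^+ c j.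
Proof.
rewrite !big_ord_recl !big_ord0 /=. rewrite !(big_mkcond (fun j => (_ < nat_of_ord j)%N)) /=.
rewrite !big_ord_recl !big_ord0 /=.
set a := c ord0. set b := c (lift ord0 ord0). set d := c (lift ord0 (lift ord0 ord0)).
set e := c (lift ord0 (lift ord0 (lift ord0 ord0))).
set f := c (lift ord0 (lift ord0 (lift ord0 (lift ord0 ord0)))).
clearbody a b d e f.
by case: a; case: b; case: d; case: e; case: f; move=> /= // _; rewrite ?expr0 ?expr1; ring.
Qed.

Lemma sum_in0 (P : finType) (l : {set P}) : (\sum_(p : P) (p \in l : nat))%N = #|l|.
Proof.
rewrite -sum1_card [RHS]big_mkcond; apply: eq_bigr => p _.
by case: (p \in l).
Qed.

Lemma sumX (T : finType) (F : T -> nat) :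
  \sum_(p : T) (1 - 2 * (F p)%:R : rat) = #|T|%:R - 2 * (\sum_p F p)%:R.
Proof.
by rewrite sumrB natr_sum mulr_sumr sumr_const.
Qed.

Lemma sumY (T : finType) (F G : T -> nat) :
  \sum_(p : T) ((1 - 2 * (F p)%:R) * (1 - 2 * (G p)%:R) : rat) =
  #|T|%:R - 2 * (\sum_p F p)%:R - 2 * (\sum_p G p)%:R + 4 * (\sum_p (F p * G p))%:R.
Proof.
rewrite (eq_bigr (fun p => (1 - 2 * (F p)%:R) - 2 * (G p)%:R + 4 * (F p * G p)%:R : rat)); last first.
  by move=> p _; rewrite natrM; ring.
by rewrite big_split sumrB /= sumX -!mulr_sumr -!natr_sum.
Qed.

Lemma odd_xor (I : finType) (x y : I -> bool) :
  odd (\sum_i (x i (+) y i : nat)) = odd (\sum_i (x i : nat)) (+) odd (\sum_i (y i : nat)).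
Proof.
have E : (\sum_i (x i (+) y i : nat) + 2 * \sum_i (x i && y i : nat) =
          \sum_i (x i : nat) + \sum_i (y i : nat))%N.
  rewrite big_distrr /= -!big_split /=; apply: eq_bigr => i _.
  by case: (x i); case: (y i).
by rewrite -oddD -E oddD oddM /= addbF.
Qed.

Lemma sgn_xor (x y : bool) : ((-1) ^+ (x (+) y) : rat) = (-1) ^+ y * (1 - 2 * (x : nat)%:R).
Proof. by case: x; case: y; rewrite /= ?expr0 ?expr1; ring. Qed.

Theorem mainTheorem2 (n : nat) (P : finType) (L R : {set {set P}})
    (cls : {set P} -> 'I_5) (b : 'I_5 -> bool) :
  ~~ odd n ->
  is_net n L cls ->
  is_relation L R ->
  ~~ odd (\sum_(i < 5) (b i : nat))%N ->
  let g := fun i : 'I_5 => (n%:R / 2 - (rel_type R cls i)%:R : rat) in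
  (t_count L R cls b)%:R =
    (n%:R ^+ 2) / 16
    + n%:R / 8 * \sum_(i < 5) (-1) ^+ b i * g i
    + 1 / 4 * \sum_(i < 5) \sum_(j < 5 | (i < j)%N)
                 (-1) ^+ (b i + b j)%N * g i * g j.
Proof.
move=> nev [[cP cL csz cdeg ccls] [cdisj cmeet]] [RL Rev] bev g.
set u := fun p i => point_type L R cls p i.
have tE : (t_count L R cls b)%:R =
    \sum_(p : P) (((\sum_(i<5) (u p i (+) b i : nat) == 0)%N : nat)%:R : rat).
  rewrite -natr_sum /t_count -sum_in0; congr (_ %:R); apply: eq_bigr => p _.
  rewrite inE sum_nat_eq0; congr nat_of_bool; apply: eq_forallb => i /=.
  by rewrite /u; case: (point_type L R cls p i); case: (b i).
have k16 p : (((\sum_(i<5) (u p i (+) b i : nat) == 0)%N : nat)%:R : rat) =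
   1 / 16 * (1 + \sum_(i<5) (-1) ^+ b i * (1 - 2 * (u p i : nat)%:R)
     + \sum_(i<5) \sum_(j < 5 | (i < j)%N) ((-1) ^+ (b i + b j)%N * (1 - 2 * (u p i : nat)%:R))
                    * (1 - 2 * (u p j : nat)%:R)).
  have := @key (fun i => u p i (+) b i).
  rewrite odd_xor (negbTE bev) addbF pt_parity //.
  move=> /(_ isT) H; apply: (@mulIf _ 16) => //. rewrite H mulrAC div1r mulVf // mul1r.
  congr (_ + _ + _).
    by apply: eq_bigr => i _; rewrite sgn_xor.
  apply: eq_bigr => i _; apply: eq_bigr => j _; rewrite !sgn_xor exprD; ring.
rewrite tE; under eq_bigr do rewrite k16.
rewrite -mulr_sumr !big_split /= sumr_const.
have hS1 i := S1 _ n _ _ _ _ RL cdisj csz i.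
have hS2 := S2 _ _ _ _ _ RL cdisj cmeet.
rewrite (_ : #|xpredT| = #|P|) // cP.
rewrite [X in _ + X + _]exchange_big /=.
under [X in _ + X + _]eq_bigr do rewrite -mulr_sumr sumX hS1 cP.
rewrite [X in _ + X]exchange_big /=.
rewrite [X in _ + X](eq_bigr (fun i : 'I_5 => \sum_(j<5 | (i<j)%N) (-1)^+(b i + b j) *
   ((n^2)%:R - 2*(rel_type R cls i * n)%:R - 2*(rel_type R cls j * n)%:R
     + 4 * (rel_type R cls i * rel_type R cls j)%:R))); last first.
  move=> i _; rewrite exchange_big /=; apply: eq_bigr => j ij.
  under eq_bigr do rewrite -mulrA.
  rewrite -mulr_sumr sumY hS1 hS1 hS2 ?cP //.
  by apply/eqP => E; rewrite E ltnn in ij.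
rewrite !mulrDr !mulr_sumr.
congr (_ + _ + _).
- by rewrite natrX; field.
- by apply: eq_bigr => i _; rewrite /g !natrM ?natrX; field.
- apply: eq_bigr => i _; rewrite !mulr_sumr; apply: eq_bigr => j _.
  by rewrite /g !natrM ?natrX; field.
Qed.
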